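(* Let $M$ be a power-associative magma (finite or infinite). Then the undirected power graph $P(M)$ is perfect: every finite induced subgraph of $P(M)$ has clique number equal to its chromatic number. In particular, the power graph of any group contains no induced cycle $C_n$ with $n$ odd, $n\ge 5$, and no induced complement of such a cycle.
   Context: A power-associative magma is a set with a binary operation such that the associative law holds for products of powers of a single element, so that positive powers $x^n$ are unambiguously defined. The (undirected) power graph $P(M)$ has vertex set $M$, with distinct $u,v$ adjacent if and only if $v=u^i$ or $u=v^j$ for some positive integers $i,j$. An infinite graph is called perfect if every finite induced subgraph has clique number equal to chromatic number. *)

(* Defs.v *)
From Stdlib Require Import List Arith Lia.
Import ListNotations.
Set Implicit Arguments.

(* Positive powers in a magma (M, op):  mpow op x n = x^(n+1),
   with x^1 = x and x^(k+1) = x^k * x. *)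
Fixpoint mpow (M : Type) (op : M -> M -> M) (x : M) (n : nat) : M :=
  match n with
  | 0 => x
  | S k => op (mpow op x k) x
  end.

(* x^i for i >= 1 (the value at i = 0 is irrelevant, only i >= 1 is used). *)
Definition ppow (M : Type) (op : M -> M -> M) (x : M) (i : nat) : M :=
  mpow op x (i - 1).

(* Power-associativity: x^m * x^n = x^(m+n) for all m, n >= 1; equivalently
   every bracketing of a product of copies of x gives the same element. *)
Definition power_associative (M : Type) (op : M -> M -> M) : Prop :=
  forall (x : M) (m n : nat), 1 <= m -> 1 <= n ->
    op (ppow op x m) (ppow op x n) = ppow op x (m + n).

Definition power_adj (M : Type) (op : M -> M -> M) (u v : M) : Prop :=
  u <> v /\
  ((exists i, 1 <= i /\ v = ppow op u i) \/ (exists j, 1 <= j /\ u = ppow op v j)).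

(* Graph-theoretic notions for an induced subgraph on a finite vertex set S
   (given as a duplicate-free list) of a graph with adjacency relation adj. *)
Definition is_clique (M : Type) (adj : M -> M -> Prop) (S C : list M) : Prop :=
  NoDup C /\ incl C S /\
  (forall x y, In x C -> In y C -> x <> y -> adj x y).

Definition proper_coloring (M : Type) (adj : M -> M -> Prop) (S : list M)
    (k : nat) (c : M -> nat) : Prop :=
  (forall x, In x S -> c x < k) /\
  (forall x y, In x S -> In y S -> adj x y -> c x <> c y).

Definition is_clique_number (M : Type) (adj : M -> M -> Prop) (S : list M)
    (w : nat) : Prop :=
  (exists C, is_clique adj S C /\ length C = w) /\
  (forall C, is_clique adj S C -> length C <= w).

Definition is_chromatic_number (M : Type) (adj : M -> M -> Prop) (S : list M)
    (k : nat) : Prop :=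
  (exists c, proper_coloring adj S k c) /\
  (forall k' c, proper_coloring adj S k' c -> k <= k').

Definition perfect_graph (M : Type) (adj : M -> M -> Prop) : Prop :=
  forall S : list M, NoDup S ->
    exists w, is_clique_number adj S w /\ is_chromatic_number adj S w.

(* Main.v *)
Require Import Defs.
From Stdlib Require Import List Arith.
From Stdlib Require Import Lia Sorted Classical ClassicalEpsilon.
Import ListNotations.

Section Generic.
Variable M : Type.
Variable adj : M -> M -> Prop.
Variable lt : M -> M -> Prop.
Variable S : list M.
Hypothesis lt_trans : forall a b c, lt a b -> lt b c -> lt a c.
Hypothesis lt_irr : forall a, ~ lt a a.
Hypothesis adj_lt : forall u v, In u S -> In v S -> adj u v -> lt u v \/ lt v u.
Hypothesis lt_adj : forall u v, lt u v -> adj u v /\ adj v u.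

Lemma pigeon k c C : proper_coloring adj S k c -> is_clique adj S C -> length C <= k.
Proof.
  intros [Hc Hp] [Hnd [Hi Hcl]].
  assert (NoDup (map c C)).
  { apply NoDup_map_NoDup_ForallPairs; [|exact Hnd].
    intros x y Hx Hy E. destruct (classic (x = y)) as [|N]; auto.
    exfalso. apply (Hp x y); auto. }
  assert (incl (map c C) (seq 0 k)).
  { intros n Hn. apply in_map_iff in Hn as [x [<- Hx]]. apply in_seq.
    specialize (Hc x (Hi x Hx)). lia. }
  pose proof (NoDup_incl_length H H0). rewrite length_map, length_seq in H1. exact H1.
Qed.

Definition rlt a b := lt b a.

Definition below (x : M) (l : list M) :=
  StronglySorted rlt l /\ incl l S /\ Forall (fun y => lt y x) l.

Lemma ss_nodup l : StronglySorted rlt l -> NoDup l.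
Proof.
  induction 1; constructor; auto.
  intro Hin. rewrite Forall_forall in H0. apply (lt_irr a). apply (H0 a Hin).
Qed.

Lemma ss_pairs l : StronglySorted rlt l -> forall y z, In y l -> In z l -> y <> z ->
  lt y z \/ lt z y.
Proof.
  induction 1; simpl; intros y z Hy Hz N; [contradiction|].
  rewrite Forall_forall in H0.
  destruct Hy as [<-|Hy]; destruct Hz as [<-|Hz]; try congruence.
  - right. apply H0; auto.
  - left. apply H0; auto.
  - apply IHStronglySorted; auto.
Qed.

Lemma max_ex (P : nat -> Prop) B : P 0 -> (forall n, P n -> n <= B) ->
  exists m, P m /\ forall n, P n -> n <= m.
Proof.
  revert P; induction B; intros P H0 Hb.
  - exists 0. split; auto.
  - destruct (classic (P (Datatypes.S B))).
    + exists (Datatypes.S B). split; auto.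
    + apply IHB; auto. intros n Hn. specialize (Hb n Hn).
      destruct (Nat.eq_dec n (Datatypes.S B)); subst; [contradiction|lia].
Qed.

Definition HM x m := (exists l, below x l /\ length l = m) /\ (forall l, below x l -> length l <= m).

Lemma HM_ex x : exists m, HM x m.
Proof.
  destruct (max_ex (fun n => exists l, below x l /\ length l = n) (length S)) as [m [Hm Hmax]].
  - exists []. repeat split; auto. constructor. intros a [].
  - intros n [l [[Hs [Hi _]] <-]]. apply NoDup_incl_length; auto. apply ss_nodup; auto.
  - exists m. split; auto. intros l Hl. apply Hmax. eauto.
Qed.

Definition h x := epsilon (inhabits 0) (HM x).

Lemma h_spec x : HM x (h x).
Proof. unfold h. apply epsilon_spec, HM_ex. Qed.

Lemma h_lt x y : In x S -> lt x y -> h x < h y.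
Proof.
  intros Hx Hxy. destruct (h_spec x) as [[l [[Hs [Hi Hf]] Hl]] _].
  destruct (h_spec y) as [_ Hm].
  assert (below y (x :: l)).
  { split; [|split].
    - constructor; auto.
    - intros a [<-|Ha]; auto.
    - constructor; auto. rewrite Forall_forall in *. intros a Ha. eauto. }
  specialize (Hm _ H). simpl in Hm. lia.
Qed.

Definition wf := fold_right (fun x acc => max (Datatypes.S (h x)) acc) 0.

Lemma wf_cons a l : wf (a :: l) = Nat.max (Datatypes.S (h a)) (wf l).
Proof. reflexivity. Qed.

Lemma wf_bound l x : In x l -> h x < wf l.
Proof. induction l; [intros []|]. rewrite wf_cons.
  pose proof (Nat.le_max_l (Datatypes.S (h a)) (wf l)).
  pose proof (Nat.le_max_r (Datatypes.S (h a)) (wf l)).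
  intros [<-|H1]; [lia|]. specialize (IHl H1). lia. Qed.

Lemma wf_ach l : wf l = 0 \/ exists x, In x l /\ wf l = Datatypes.S (h x).
Proof.
  induction l; auto. rewrite wf_cons.
  destruct (Nat.le_ge_cases (Datatypes.S (h a)) (wf l)).
  - rewrite Nat.max_r by auto. destruct IHl as [E|[x [Hx E]]].
    + lia.
    + right. exists x. split; simpl; auto.
  - rewrite Nat.max_l by auto. right. exists a. split; simpl; auto.
Qed.

Lemma generic_perfect : exists w, is_clique_number adj S w /\ is_chromatic_number adj S w.
Proof.
  set (w := wf S).
  assert (Hcol : proper_coloring adj S w h).
  { split.
    - intros. apply wf_bound; auto.
    - intros x y Hx Hy Ha E. destruct (adj_lt x y Hx Hy Ha) as [L|L].
      + pose proof (h_lt x y Hx L). lia.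
      + pose proof (h_lt y x Hy L). lia. }
  assert (Hcl : exists C, is_clique adj S C /\ length C = w).
  { destruct (wf_ach S) as [E|[x [Hx E]]].
    - exists []. split; [|simpl; unfold w; lia].
      split; [constructor|split]; [intros a []|intros a b []].
    - destruct (h_spec x) as [[l [[Hs [Hi Hf]] Hl]] _].
      assert (Hss : StronglySorted rlt (x :: l)) by (constructor; auto).
      exists (x :: l). split; [|simpl; unfold w; lia].
      split; [apply ss_nodup; auto|split].
      + intros a [<-|Ha]; auto.
      + intros a b Ha Hb N. destruct (ss_pairs _ Hss a b Ha Hb N) as [L|L]; apply lt_adj in L; tauto. }
  destruct Hcl as [C [HC HL]].
  exists w. split; split.
  - exists C; auto.
  - intros C' HC'. eapply pigeon; eauto.
  - exists h; auto.
  - intros k' c' Hp. rewrite <- HL. eapply pigeon; eauto.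
Qed.
End Generic.

Section Power.
Variable M : Type.
Variable op : M -> M -> M.
Hypothesis PA : power_associative op.

Lemma ppow_mul x i j : 1 <= i -> 1 <= j -> ppow op (ppow op x j) i = ppow op x (i * j).
Proof.
  intros Hi Hj. unfold ppow at 1.
  assert (forall n, mpow op (ppow op x j) n = ppow op x (Datatypes.S n * j)).
  { induction n.
    - simpl. rewrite Nat.add_0_r. reflexivity.
    - simpl mpow. rewrite IHn. rewrite PA; [|nia|lia]. f_equal. nia. }
  rewrite H. f_equal. nia.
Qed.

Definition R a b := exists i, 1 <= i /\ a = ppow op b i.

Lemma R_refl a : R a a.
Proof. exists 1. split; auto. Qed.

Lemma R_trans a b c : R a b -> R b c -> R a c.
Proof.
  intros [i [Hi ->]] [j [Hj ->]]. exists (i * j). split; [nia|]. apply ppow_mul; auto.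
Qed.

Fixpoint before (S : list M) (u v : M) : Prop :=
  match S with [] => False | a :: S' => (u = a /\ In v S') \/ before S' u v end.

Lemma before_in2 S u v : before S u v -> In v S.
Proof. induction S; simpl; intuition. Qed.

Lemma before_trans S u v w : NoDup S -> before S u v -> before S v w -> before S u w.
Proof.
  induction S as [|a S IH]; simpl; [tauto|]. intros Hnd. inversion Hnd; subst.
  intros [[-> Hv]|B1] [[-> Hw]|B2].
  - contradiction.
  - left. split; auto. eapply before_in2; eauto.
  - apply before_in2 in B1. contradiction.
  - right. eauto.
Qed.

Lemma before_irr S u : NoDup S -> ~ before S u u.
Proof.
  induction S as [|a S IH]; simpl; [tauto|]. intros Hnd. inversion Hnd; subst.
  intros [[-> H]|B]; [contradiction|]. apply IH in B; auto.
Qed.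

Lemma before_total S u v : In u S -> In v S -> u <> v -> before S u v \/ before S v u.
Proof.
  induction S as [|a S IH]; simpl; [tauto|].
  intros [->|Hu] [->|Hv] N; try congruence; auto.
  destruct (IH Hu Hv N); auto.
Qed.

Definition plt S u v := R u v /\ (~ R v u \/ before S u v).

Lemma plt_trans S a b c : NoDup S -> plt S a b -> plt S b c -> plt S a c.
Proof.
  intros Hnd [Rab Oab] [Rbc Obc]. split; [eapply R_trans; eauto|].
  destruct (classic (R c a)) as [Rca|]; auto. right.
  destruct Oab as [N|Bab]; [exfalso; apply N; eapply R_trans; eauto|].
  destruct Obc as [N|Bbc]; [exfalso; apply N; eapply R_trans; eauto|].
  eapply before_trans; eauto.
Qed.

Lemma plt_irr S a : NoDup S -> ~ plt S a a.
Proof.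
  intros Hnd [_ [N|B]]; [apply N, R_refl|]. eapply before_irr; eauto.
Qed.

Lemma adj_R u v : power_adj op u v <-> u <> v /\ (R u v \/ R v u).
Proof.
  unfold power_adj, R. split; intros [N H]; split; auto; destruct H; auto.
Qed.

Lemma plt_adj S u v : NoDup S -> plt S u v -> power_adj op u v /\ power_adj op v u.
Proof.
  intros Hnd L. assert (u <> v) by (intros ->; eapply plt_irr; eauto).
  destruct L as [Ruv _]. rewrite !adj_R. split; split; auto.
Qed.

Lemma adj_plt S u v : In u S -> In v S -> power_adj op u v -> plt S u v \/ plt S v u.
Proof.
  intros Hu Hv Ha. rewrite adj_R in Ha. destruct Ha as [N Ha].
  assert (Gen : forall a b, In a S -> In b S -> a <> b -> R a b -> plt S a b \/ plt S b a).
  { intros a b Ha' Hb' N' Rab. destruct (classic (R b a)) as [Rba|nR].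
    - destruct (before_total S a b Ha' Hb' N').
      + left. split; auto.
      + right. split; auto.
    - left. split; auto. }
  destruct Ha as [Ruv|Rvu].
  - apply Gen; auto.
  - destruct (Gen v u); auto.
Qed.
End Power.

Theorem mainTheorem3 (M : Type) (op : M -> M -> M) :
  power_associative op -> perfect_graph (power_adj op).
Proof.
  intros PA S Hnd.
  apply (generic_perfect M (power_adj op) (plt M op S) S).
  - intros. eapply plt_trans; eauto.
  - intros. apply plt_irr; auto.
  - intros. apply adj_plt; auto.
  - intros. eapply plt_adj; eauto.
Qed.
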